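(* Let $G$ be a graph, $\varphi$ a $4$-colouring of $G$, and $v$ a vertex of $G$ of degree $4$ that is $\varphi$-frozen. If $v$ has two $\varphi$-frozen neighbours $u_1,u_2$ with $\varphi(u_1)=\varphi(u_2)$, then all neighbours of $v$ are $\varphi$-frozen.
   Context: Colourings are proper $4$-colourings (colours $\{1,2,3,4\}$); a recolouring sequence is a sequence of proper $4$-colourings in which consecutive ones differ on exactly one vertex. A vertex $v$ is $\varphi$-frozen if $\gamma(v)=\varphi(v)$ for every $4$-colouring $\gamma$ obtainable from $\varphi$ by a recolouring sequence. *)

(* Defs.v *)
From mathcomp Require Import all_boot.
Set Implicit Arguments. Unset Strict Implicit. Unset Printing Implicit Defensive.

(* A (finite, simple) graph: vertex type T : finType, adjacency e : rel T,
   assumed symmetric and irreflexive in the theorem. Colours {1,2,3,4}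
   are represented by 'I_4. *)

Definition simple_graph {T : finType} (e : rel T) : Prop :=
  symmetric e /\ irreflexive e.

Definition colouring (T : finType) := {ffun T -> 'I_4}.

Definition proper_col {T : finType} (e : rel T) (c : colouring T) : Prop :=
  forall x y, e x y -> c x != c y.

Definition differ_on_one {T : finType} (c d : colouring T) : Prop :=
  #|[set x | c x != d x]| = 1.

Inductive reachable {T : finType} (e : rel T) (c : colouring T) : colouring T -> Prop :=
| reach_refl : proper_col e c -> reachable e c c
| reach_step : forall d d', reachable e c d -> proper_col e d' ->
    differ_on_one d d' -> reachable e c d'.

Definition frozen {T : finType} (e : rel T) (phi : colouring T) (v : T) : Prop :=
  forall gamma, reachable e phi gamma -> gamma v = phi v.

Definition degree {T : finType} (e : rel T) (v : T) : nat := #|[set u | e v u]|.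

(* Main.v *)
Require Import Defs.
From mathcomp Require Import all_boot.

Set Implicit Arguments. Unset Strict Implicit.
Definition covn (c0 a x y : nat) := all (fun k => (k != c0) ==> [|| k == a, k == x | k == y]) (iota 0 4).
Definition keyb := all (fun c0 => all (fun a => all (fun x => all (fun y => all (fun p => all (fun q =>
  [&& a != c0, covn c0 a x y, covn c0 a p q & (x == p) || (y == q)] ==> (x == p) && (y == q))
  (iota 0 4)) (iota 0 4)) (iota 0 4)) (iota 0 4)) (iota 0 4)) (iota 0 4).
Lemma keyb_true : keyb. Proof. by vm_compute. Qed.

Lemma in4 (n : 'I_4) : (n : nat) \in iota 0 4.
Proof. by rewrite mem_iota /= ltn_ord. Qed.

Lemma covn_of (c0 a x y : 'I_4) :
  (forall k : 'I_4, k != c0 -> [|| k == a, k == x | k == y]) -> covn c0 a x y.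
Proof.
move=> H; apply/allP => k; rewrite mem_iota => /andP[_ hk]; apply/implyP => hne.
by have := H (Ordinal hk) hne.
Qed.

Lemma key (c0 a x y p q : 'I_4) : a != c0 ->
  (forall k : 'I_4, k != c0 -> [|| k == a, k == x | k == y]) ->
  (forall k : 'I_4, k != c0 -> [|| k == a, k == p | k == q]) ->
  x = p \/ y = q -> x = p /\ y = q.
Proof.
move=> ha H1 H2 H3.
have := keyb_true.
move=> /allP /(_ _ (in4 c0)) /allP /(_ _ (in4 a)) /allP /(_ _ (in4 x)) /allP /(_ _ (in4 y))
  /allP /(_ _ (in4 p)) /allP /(_ _ (in4 q)) /implyP.
rewrite ha (@covn_of c0 a x y H1) (@covn_of c0 a p q H2) /=.
have -> : ((x : nat) == p) || ((y : nat) == q).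
  by case: H3 => ->; rewrite eqxx ?orbT.
by move=> /(_ isT) /andP[/eqP/val_inj -> /eqP/val_inj ->].
Qed.

Lemma reach_proper (T : finType) (e : rel T) phi g : reachable e phi g -> proper_col e g.
Proof. by case. Qed.

Lemma cover (T : finType) (e : rel T) (phi g : colouring T) v :
  simple_graph e -> frozen e phi v -> reachable e phi g ->
  forall k, k != g v -> exists u, e v u /\ g u = k.
Proof.
move=> [esym eirr] fr rg k hk.
case: (boolP [exists u, e v u && (g u == k)]) => [/existsP[u /andP[h1 /eqP h2]]|hn].
  by exists u.
exfalso.
pose g' : colouring T := [ffun x => if x == v then k else g x].
have pg := reach_proper rg.
have nb : forall u, e v u -> g u != k.
  move=> u hu; apply/negP => /eqP hgu; move/negP: hn; apply.
  by apply/existsP; exists u; rewrite hu hgu eqxx.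
have pg' : proper_col e g'.
  move=> x y hxy; rewrite !ffunE.
  case: (eqVneq x v) => [ex|nx]; case: (eqVneq y v) => [ey|ny].
  - by subst; rewrite eirr in hxy.
  - by subst; rewrite eq_sym; apply: nb.
  - by subst; apply: nb; rewrite esym.
  - by apply: pg.
have d1 : differ_on_one g g'.
  rewrite /differ_on_one.
  have -> : [set x | g x != g' x] = [set v].
    apply/setP => x; rewrite !inE ffunE.
    by case: (eqVneq x v) => [->|]; rewrite ?eqxx // eq_sym.
  by rewrite cards1.
have := fr g' (reach_step rg pg' d1).
rewrite ffunE eqxx => hkv.
have := fr g rg; rewrite -hkv => hh; by rewrite hh eqxx in hk.
Qed.

Theorem lemma8 (T : finType) (e : rel T) (phi : colouring T) (v u1 u2 : T) :
  simple_graph e -> proper_col e phi ->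
  degree e v = 4 -> frozen e phi v ->
  e v u1 -> e v u2 -> u1 != u2 ->
  frozen e phi u1 -> frozen e phi u2 -> phi u1 = phi u2 ->
  forall w, e v w -> frozen e phi w.
Proof.
move=> sg pphi deg frv e1 e2 n12 fr1 fr2 eq12.
pose N := [set u | e v u].
have c2 : #|N :\ u1 :\ u2| == 2.
  have h1 : u1 \in N by rewrite inE.
  have h2 : u2 \in N :\ u1 by rewrite !inE eq_sym n12.
  have A := cardsD1 u1 N; have B := cardsD1 u2 (N :\ u1).
  rewrite h1 [#|N|]deg in A; rewrite h2 in B.
  move/eqP: A; rewrite B -[4]/(1 + (1 + 2)) !eqn_add2l eq_sym; done.
case/cards2P: c2 => w3 [w4 [n34 hN]].
have memN : forall x, e v x -> [\/ x = u1, x = u2, x = w3 | x = w4].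
  move=> x hx.
  case: (eqVneq x u1) => [->|nx1]; first by constructor 1.
  case: (eqVneq x u2) => [->|nx2]; first by constructor 2.
  have : x \in N :\ u1 :\ u2 by rewrite !inE nx1 nx2 hx.
  by rewrite hN !inE => /orP[/eqP->|/eqP->]; [constructor 3|constructor 4].
have w3N : e v w3.
  have : w3 \in N :\ u1 :\ u2 by rewrite hN !inE eqxx.
  by rewrite !inE => /and3P[].
have w4N : e v w4.
  have : w4 \in N :\ u1 :\ u2 by rewrite hN !inE eqxx orbT.
  by rewrite !inE => /and3P[].
have av : phi u1 != phi v.
  by rewrite eq_sym; apply: pphi.
have cov : forall g, reachable e phi g ->
    forall k, k != phi v -> [|| k == phi u1, k == g w3 | k == g w4].
  move=> g rg k hk.
  have gv : g v = phi v := frv g rg.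
  rewrite -gv in hk.
  have [u [hu <-]] := cover sg frv rg hk.
  case: (memN u hu) => ->.
  - by rewrite (fr1 g rg) eqxx.
  - by rewrite (fr2 g rg) eq12 eqxx.
  - by rewrite eqxx orbT.
  - by rewrite eqxx !orbT.
have rphi : reachable e phi phi by constructor.
have inv : forall g, reachable e phi g -> g w3 = phi w3 /\ g w4 = phi w4.
  move=> g rg; elim: rg => [_|d d' rd [IH3 IH4] pd' dd]; first by [].
  apply: (key av (cov d' (reach_step rd pd' dd)) (cov phi rphi)).
  case: (eqVneq (d w3) (d' w3)) => [<-|h3]; first by left.
  case: (eqVneq (d w4) (d' w4)) => [<-|h4]; first by right.
  exfalso.
  have : [set w3; w4] \subset [set x | d x != d' x].
    by apply/subsetP => x; rewrite !inE => /orP[/eqP->|/eqP->].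
  move/subset_leq_card; rewrite cards2 n34 /differ_on_one.
  by rewrite dd.
move=> w hw; case: (memN w hw) => ->; [exact: fr1|exact: fr2| |].
- by move=> g rg; case: (inv g rg).
- by move=> g rg; case: (inv g rg).
Qed.
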